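(* Let $\mathfrak u=(a_0,a_1,\dots)$ be a (finite or infinite) sequence of non-negative integers such that $\Upsilon^{(6)}(\mathfrak u)=\mathfrak u$. Then $\mathfrak u$ has at most one champion.
   Context: For a finite or infinite sequence $\mathfrak u=(a_0,a_1,\dots)$ of non-negative integers, the P-G triangle generated by $\mathfrak u$ consists of the numbers $d_k^{(j)}$ defined by $d_k^{(0)}=a_k$ and $d_k^{(j+1)}=|d_{k+1}^{(j)}-d_k^{(j)}|$ for $j,k\ge 0$ (for a finite sequence $(a_0,\dots,a_{N-1})$, for $0\le k\le N-1-j$). The operator $\Upsilon$ sends $\mathfrak u$ to the left edge $(d_0^{(0)},d_0^{(1)},d_0^{(2)},\dots)$ of its P-G triangle (a sequence of the same length as $\mathfrak u$); $\Upsilon^{(n)}$ denotes its $n$-th iterate. The term $a_n$ ($n\ge0$) is a champion of $\mathfrak u$ if $a_n>0$ and $a_j<a_n$ for all $0\le j<n$. *)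

(* Defs.v *)
From mathcomp Require Import all_boot.
Set Implicit Arguments. Unset Strict Implicit. Unset Printing Implicit Defensive.

Definition absdiff (m n : nat) : nat := (m - n) + (n - m).

(* P-G triangle: pg a j k = d_k^{(j)} *)
Fixpoint pg (a : nat -> nat) (j k : nat) : nat :=
  match j with
  | 0 => a k
  | j'.+1 => absdiff (pg a j' k.+1) (pg a j' k)
  end.

Definition Ups (a : nat -> nat) : nat -> nat := fun j => pg a j 0.

(* Upsilon on finite sequences; d_0^{(j)} only depends on a_0..a_j,
   so padding beyond the length is irrelevant for j < size s *)
Definition Ups_seq (s : seq nat) : seq nat :=
  mkseq (fun j => pg (fun k => nth 0 s k) j 0) (size s).

Definition champion (a : nat -> nat) (n : nat) : Prop :=
  0 < a n /\ forall j, j < n -> a j < a n.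

Definition champion_seq (s : seq nat) (n : nat) : Prop :=
  n < size s /\ 0 < nth 0 s n /\ forall j, j < n -> nth 0 s j < nth 0 s n.

(* Main.v *)
Require Import Defs.
From mathcomp Require Import all_boot.
From mathcomp Require Import zify.
Set Implicit Arguments.
Unset Strict Implicit.

Lemma pg_bound (a : nat -> nat) N B :
  (forall i, i <= N -> a i <= B) -> forall j k, k + j <= N -> pg a j k <= B.
Proof.
move=> H; elim=> [|j IH] k hk /=; first by apply: H; lia.
have h1 := IH k.+1 ltac:(lia); have h2 := IH k ltac:(lia).
rewrite /absdiff; lia.
Qed.

Lemma iter_bound (a : nat -> nat) N B i :
  (forall k, k <= N -> a k <= B) -> forall k, k <= N -> iter i Ups a k <= B.
Proof.
move=> H; elim: i => [|i IH] k hk //=; first exact: H.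
  have := @pg_bound _ _ _ IH k 0 ltac:(lia); by [].
Qed.

Lemma pg_ext (a b : nat -> nat) j k :
  (forall i, i <= j + k -> a i = b i) -> pg a j k = pg b j k.
Proof.
elim: j k => [|j IH] k H /=; first by apply: H; lia.
rewrite (IH k.+1) ?(IH k) // => i hi; apply: H; lia.
Qed.

Lemma hook (a : nat -> nat) p c :
  (forall i, i <= p -> a i < c) -> (forall i, i <= p.+1 -> a i <= c) ->
  pg a p.+1 0 = c -> forall k, k <= p -> a k = 0.
Proof.
move=> Hlt Hle H0.
have Hb1 : forall j k, k + j <= p -> pg a j k <= c.-1.
  apply: pg_bound => i hi; have := Hlt i hi; lia.
have Hb2 := pg_bound Hle.
have Hh : forall t, t <= p.+1 -> pg a (p.+1 - t) t = c.
  elim=> [|t IH] ht; first by rewrite subn0.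
  have := IH ltac:(lia).
  have -> : p.+1 - t = (p - t).+1 by lia.
  rewrite /= /absdiff.
  have := Hb2 (p - t) t.+1 ltac:(lia).
  have := Hb1 (p - t) t ltac:(lia).
  have -> : p.+1 - t.+1 = p - t by lia.
  lia.
have Hz : forall t, t <= p -> pg a (p - t) t = 0.
  move=> t ht; have := Hh t ltac:(lia).
  have -> : p.+1 - t = (p - t).+1 by lia.
  rewrite /= /absdiff.
  have := Hb2 (p - t) t.+1 ltac:(lia).
  have := Hb1 (p - t) t ltac:(lia).
  lia.
have Hd : forall d, d <= p -> forall j, j <= p - d -> pg a j (p - d - j) = 0.
  elim=> [|d IH] hd j hj.
    have := Hz (p - j) ltac:(lia).
    have -> : p - (p - j) = j by lia.
    by rewrite subn0.
  have := IH ltac:(lia) j.+1 ltac:(lia).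
  rewrite /= /absdiff.
  have := IH ltac:(lia) j ltac:(lia).
  have -> : p - d - j.+1 = p - d.+1 - j by lia.
  have -> : p - d - j = (p - d.+1 - j).+1 by lia.
  lia.
move=> k hk; have := Hd (p - k) ltac:(lia) 0 ltac:(lia).
have -> : p - (p - k) - 0 = k by lia.
done.
Qed.

Lemma core (a : nat -> nat) m n :
  (forall k, k <= n -> iter 6 Ups a k = a k) ->
  champion a m -> champion a n -> m < n -> False.
Proof.
move=> Hper [hm0 hm] [hn0 hn] mn.
case: n Hper hn0 hn mn => [|p] //= Hper hn0 hn mn.
set c := a p.+1.
set a' := iter 5 Ups a.
have B1 : forall k, k <= p -> a' k <= c.-1.
  apply: iter_bound => k hk; have := hn k ltac:(lia); lia.
have B2 : forall k, k <= p.+1 -> a' k <= c.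
  apply: iter_bound => k hk.
  case: (ltnP k p.+1) => hk'; first by have := hn k hk'; lia.
  have -> : k = p.+1 by lia. done.
have E : pg a' p.+1 0 = c by have := Hper p.+1 (leqnn _).
have B0 : forall i, i <= p -> a' i < c.
  move=> i hi; have := B1 i hi; move: hn0; rewrite -/c; lia.
have Z := hook B0 B2 E.
have Z' : forall k, k <= p -> iter 6 Ups a k <= 0.
  move=> k hk; rewrite iterS; apply: (@iter_bound a' p 0 1) => // i hi.
  by rewrite Z.
have h := Z' m ltac:(lia). have h2 := Hper m ltac:(lia). simpl in h, h2. rewrite h2 in h. lia.
Qed.

Lemma core2 (a : nat -> nat) m n :
  (forall k, k <= n -> iter 6 Ups a k = a k) ->
  (forall k, k <= m -> iter 6 Ups a k = a k) ->
  champion a m -> champion a n -> m = n.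
Proof.
move=> H1 H2 cm cn.
case: (ltngtP m n) => // h.
- by case: (core H1 cm cn h).
- by case: (core H2 cn cm h).
Qed.

Lemma iter_seq (s : seq nat) i :
  size (iter i Ups_seq s) = size s /\
  forall k, k < size s -> nth 0 (iter i Ups_seq s) k = iter i Ups (fun k => nth 0 s k) k.
Proof.
elim: i => [|i [IHs IH]] //=.
rewrite /Ups_seq size_mkseq IHs; split=> // k hk.
rewrite nth_mkseq ?IHs // /Ups; apply: pg_ext => j hj.
apply: IH; lia.
Qed.

Theorem theorem2p4 :
  (forall a : nat -> nat, iter 6 Ups a = a ->
     forall m n, champion a m -> champion a n -> m = n) /\
  (forall s : seq nat, iter 6 Ups_seq s = s ->
     forall m n, champion_seq s m -> champion_seq s n -> m = n).
Proof.
split.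
  move=> a H m n; apply: core2 => k _; by rewrite H.
move=> s H m n [hm cm] [hn cn].
have [_ E] := iter_seq s 6.
have P : forall k, k < size s -> iter 6 Ups (fun k => nth 0 s k) k = nth 0 s k.
  by move=> k hk; rewrite -E // H.
apply: (@core2 (fun k => nth 0 s k)) => //.
- move=> k hk; apply: P; lia.
- move=> k hk; apply: P; lia.
Qed.
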